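(* Let $G$ be a graph with $\operatorname{diam}(\overline{G})=2$. Then $\gamma(G)=2$ if and only if $pav(\overline{G},0)>0$.
   Context: All graphs are finite, simple and undirected; $\overline{G}$ is the complement, $\operatorname{diam}$ the diameter and $\gamma$ the domination number. For a graph $F$ and integer $i\ge 0$, $pav(F,i)$ is the number of pairs of adjacent vertices of $F$ joined by exactly $i$ paths of length two (equivalently, having exactly $i$ common neighbours). *)

(* Defs.v *)
From mathcomp Require Import all_boot.
Set Implicit Arguments. Unset Strict Implicit. Unset Printing Implicit Defensive.

Definition simple_graph (T : finType) (e : rel T) : Prop :=
  symmetric e /\ irreflexive e.

Definition compl_graph (T : finType) (e : rel T) : rel T :=
  fun x y => (x != y) && ~~ e x y.

Definition dist_le (T : finType) (e : rel T) (k : nat) (x y : T) : Prop :=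
  exists p : seq T, [/\ size p <= k, path e x p & last x p = y].

(* diameter equals d: all distances are finite and <= d, and some distance exceeds d-1.
   (a disconnected graph has infinite diameter, hence diameter <> d) *)
Definition diam_eq (T : finType) (e : rel T) (d : nat) : Prop :=
  (forall x y, dist_le e d x y) /\ (exists x y, ~ dist_le e d.-1 x y).

Definition dominating (T : finType) (e : rel T) (D : {set T}) : bool :=
  [forall x, (x \in D) || [exists y in D, e x y]].

(* domination number: minimum size of a dominating set (T itself dominates) *)
Definition domination_number (T : finType) (e : rel T) : nat :=
  \big[minn/#|T|]_(D : {set T} | dominating e D) #|D|.

(* pav F i: number of (unordered) pairs of adjacent vertices with exactly i common
   neighbours; counted as ordered pairs divided by 2 (F symmetric). *)
Definition pav (T : finType) (F : rel T) (i : nat) : nat :=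
  #|[set p : T * T | F p.1 p.2 && (#|[set z | F p.1 z && F p.2 z]| == i)]| %/ 2.

(* Main.v *)
Require Import Defs.
From mathcomp Require Import all_boot.

Lemma dn_le {T : finType} {e : rel T} {D : {set T}} :
  dominating e D -> domination_number e <= #|D|.
Proof.
move=> HD; rewrite /domination_number.
have : D \in index_enum {set T} by rewrite mem_index_enum.
elim: (index_enum _) => [//|a r IH]; rewrite inE big_cons.
case/orP => [/eqP <-|/IH h]; first by rewrite HD geq_minl.
case: ifP => _ //; exact: leq_trans (geq_minr _ _) h.
Qed.

Lemma dn_wit (T : finType) (e : rel T) :
  exists2 D : {set T}, dominating e D & domination_number e = #|D|.
Proof.
rewrite /domination_number.
apply: (big_ind (fun n => exists2 D : {set T}, dominating e D & n = #|D|)).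
- exists setT; last by rewrite cardsT.
  by apply/forallP => x; rewrite in_setT.
- move=> x y [D1 H1 ->] [D2 H2 ->].
  case: (leqP #|D1| #|D2|) => h.
  + by exists D1 => //; rewrite (minn_idPl h).
  + by exists D2 => //; rewrite (minn_idPr (ltnW h)).
- by move=> D HD; exists D.
Qed.

Theorem lemma9 (T : finType) (e : rel T) :
  simple_graph e ->
  diam_eq (compl_graph e) 2 ->
  (domination_number e = 2 <-> 0 < pav (compl_graph e) 0).
Proof.
move=> [eS eirr] [Hd [x0 [y0 Hxy0]]].
set H := compl_graph e.
have Hsym : symmetric H by move=> a b; rewrite /H /compl_graph eq_sym eS.
have HxyP : forall x y, x != y -> ~~ e x y -> H x y.
  by move=> x y nxy nexy; rewrite /H /compl_graph nxy.
rewrite /pav divn_gt0 //.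
split.
- move=> Hg.
  have [D HD HDc] := dn_wit _ e.
  have /cards2P [x [y [nxy DE]]] : #|D| == 2 by rewrite -HDc Hg.
  have nocom : forall z, ~~ (H x z && H y z).
    move=> z; apply/negP => /andP [hxz hyz].
    move/forallP: HD => /(_ z) /orP [].
      rewrite DE !inE => /orP [] /eqP zE; subst z.
        by move: hxz; rewrite /H /compl_graph eqxx.
      by move: hyz; rewrite /H /compl_graph eqxx.
    move/existsP => [w /andP [] ]; rewrite DE !inE => /orP [] /eqP -> ezw.
      by move: hxz; rewrite /H /compl_graph eS ezw andbF.
    by move: hyz; rewrite /H /compl_graph eS ezw andbF.
  have hxy : H x y.
    apply: HxyP => //; apply/negP => exy.
    have [p [sp pp lp]] := Hd x y.
    case: p sp pp lp => [|a [|b [|c q]]] //=.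
    + by move=> _ _ E; move: nxy; rewrite E eqxx.
    + move=> _; rewrite andbT => hxa E; subst a.
      by move: hxa; rewrite /H /compl_graph exy andbF.
    + move=> _ /and3P [hxa hab _] E; subst b.
      have hya : H y a by rewrite Hsym.
      by move: (nocom a); rewrite [H x a]hxa hya.
  apply/card_gt1P; exists (x, y), (y, x); split.
  + rewrite inE /= hxy /= cards_eq0; apply/eqP/setP => z; rewrite !inE.
    by apply/negbTE; exact: nocom.
  + rewrite inE /= Hsym hxy /= cards_eq0; apply/eqP/setP => z; rewrite !inE.
    by rewrite andbC; apply/negbTE; exact: nocom.
  + apply/negP => /eqP [E _]; by move: nxy; rewrite E eqxx.
- case/card_gt1P => [[x y] [_ [+ _ _]]]; rewrite inE /= cards_eq0 => /andP [hxy /eqP /setP C].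
  have nocom : forall z, ~~ (H x z && H y z).
    by move=> z; move: (C z); rewrite !inE => ->.
  have nxy : x != y by move: hxy; rewrite /H /compl_graph => /andP [].
  have Hdom : dominating e [set x; y].
    apply/forallP => z; rewrite !inE.
    case: (eqVneq z x) => //= zx; case: (eqVneq z y) => //= zy.
    apply/existsP.
    move: (nocom z); rewrite /H /compl_graph negb_and !negb_and !negbK.
    rewrite ![x == z]eq_sym ![y == z]eq_sym (negbTE zx) (negbTE zy) /= => /orP [] h.
      by exists x; rewrite !inE eqxx /= eS.
    by exists y; rewrite !inE eqxx orbT /= eS.
  have le2 := dn_le Hdom; rewrite cards2 nxy /= in le2.
  apply/eqP; rewrite eqn_leq le2 /=.
  have [D HD ->] := dn_wit _ e.
  rewrite ltnNge; apply/negP => /card_le1P HD1.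
  case: (pickP (mem D)) => [v vD|D0].
  + (* v isolated in H *)
    have iso : forall w, w != v -> e w v.
      move=> w wv; move/forallP: HD => /(_ w) /orP [wD|].
        by move: (HD1 v vD w); rewrite wD inE => /esym/eqP E; rewrite E eqxx in wv.
      move/existsP => [u /andP [uD ewu]].
      by move: (HD1 v vD u); rewrite uD inE => /esym /eqP <-.
    have [w wv] : exists w, w != v.
      case: (eqVneq x0 v) => [E|]; last by exists x0.
      exists y0; apply/negP => /eqP E'; apply: Hxy0; exists [::].
      by split => //=; rewrite E E'.
    have [p [sp pp lp]] := Hd v w.
    case: p sp pp lp => [|a q] /=.
      by move=> _ _ E; move: wv; rewrite E eqxx.
    move=> _ /andP [hva _] _.
    move: hva; rewrite /H /compl_graph => /andP [va].
    by rewrite eS iso // eq_sym.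
  + have D0' : forall z, (z \in D) = false by move=> z; exact: D0 z.
    move/forallP: HD => /(_ x0); rewrite D0' /=.
    by move/existsP => [u]; rewrite D0'.
Qed.
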